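(* Let $k$ be a field of characteristic not $2$ or $3$, let $\mathcal{A}\in k^{n+1}\otimes\operatorname{Sym}_2k^{m+1}$ and let $\mathfrak{C}\subseteq\mathbb{P}^m$ be its Cayley variety. If $\ell$ is a secant line of $\mathfrak{C}$ not contained in $\mathfrak{C}$, then $\psi(\ell)$ is a single point of $\widehat{\mathbb{P}}^n$. Conversely, if $\ell$ is a line such that $\psi(\ell)$ is a single point, then $\ell$ is a secant line of $\mathfrak{C}$.
   Context: $\mathcal{A}$ is an $(n+1)$-tuple $(A_0,\dots,A_n)$ of symmetric $(m+1)\times(m+1)$ matrices; $\mathfrak{C}=Z(\mathbf{y}^TA_0\mathbf{y},\dots,\mathbf{y}^TA_n\mathbf{y})$; $\psi:\mathbb{P}^m\dashrightarrow\widehat{\mathbb{P}}^n$, $y\mapsto(y^TA_0y:\dots:y^TA_ny)$, and $\psi(\ell)$ means the image of the points of $\ell$ where $\psi$ is defined. A secant line of $\mathfrak{C}$ is a line meeting $\mathfrak{C}$ in a subscheme of length at least $2$, i.e. either through two distinct points of $\mathfrak{C}$ or tangent to $\mathfrak{C}$ at a point. *)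

(* Defs.v *)
From HB Require Import structures.
From mathcomp Require Import all_boot all_order all_algebra.
Set Implicit Arguments. Unset Strict Implicit. Unset Printing Implicit Defensive.
Import GRing.Theory.
Local Open Scope ring_scope.

(* Geometric points: everything is over an algebraically closed field K.
   Points of P^m are nonzero row vectors of K^(m+1) up to scaling. *)
Section Cayley.
Variables (K : fieldType) (m n : nat).
Implicit Types (A : 'M[K]_m.+1) (y z p q : 'rV[K]_m.+1).

Definition qf A y : K := (y *m A *m y^T) 0 0.
Definition bf A y z : K := (y *m A *m z^T) 0 0.

Definition in_cayley (As : 'I_n.+1 -> 'M[K]_m.+1) y :=
  y != 0 /\ forall i, qf (As i) y = 0.

Definition proj_eq (N : nat) (y z : 'rV[K]_N) := exists c : K, c != 0 /\ z = c *: y.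

Definition is_line p q := row_free (col_mx p q).
Definition on_line p q y :=
  exists s t : K, (s != 0 \/ t != 0) /\ y = s *: p + t *: q.

Definition psi_defined (As : 'I_n.+1 -> 'M[K]_m.+1) y := exists i, qf (As i) y != 0.
Definition psi_vec (As : 'I_n.+1 -> 'M[K]_m.+1) y : 'rV[K]_n.+1 :=
  \row_i qf (As i) y.

Definition psi_single_point (As : 'I_n.+1 -> 'M[K]_m.+1) p q :=
  exists v : 'rV[K]_n.+1, v != 0 /\
    (exists y, on_line p q y /\ psi_defined As y) /\
    (forall y, on_line p q y -> psi_defined As y -> proj_eq v (psi_vec As y)).

Definition line_in_cayley (As : 'I_n.+1 -> 'M[K]_m.+1) p q :=
  forall y, on_line p q y -> in_cayley As y.

(* secant: through two distinct points of C, or tangent to C at a point y,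
   i.e. y in C and l contained in the Zariski tangent space of C at y *)
Definition secant_line (As : 'I_n.+1 -> 'M[K]_m.+1) p q :=
  (exists y z, [/\ on_line p q y, on_line p q z, in_cayley As y, in_cayley As z
               & ~ proj_eq y z])
  \/ (exists y, [/\ on_line p q y, in_cayley As y &
        forall z, on_line p q z -> forall i, bf (As i) y z = 0]).

End Cayley.

(* Main.v *)
Require Import Defs.
From HB Require Import structures.
From mathcomp Require Import all_boot all_order all_algebra.
From mathcomp Require Import ring.
From Stdlib Require Import Classical.
Set Implicit Arguments. Unset Strict Implicit. Unset Printing Implicit Defensive.
Import GRing.Theory.
Local Open Scope ring_scope.

Section Basics.
Variables (K : fieldType) (m : nat).
Implicit Types (A : 'M[K]_m.+1) (y z w p q : 'rV[K]_m.+1).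

Lemma bfDl A a b y z w : bf A (a *: y + b *: z) w = a * bf A y w + b * bf A z w.
Proof. by rewrite /bf !mulmxDl -!scalemxAl !mxE. Qed.

Lemma bfDr A a b y z w : bf A w (a *: y + b *: z) = a * bf A w y + b * bf A w z.
Proof. by rewrite /bf linearD !linearZ /= !mulmxDr -!scalemxAr !mxE. Qed.

Lemma bf_sym A y z : A^T = A -> bf A y z = bf A z y.
Proof.
move=> hA; rewrite /bf.
have -> : y *m A *m z^T = (z *m A *m y^T)^T by rewrite !trmx_mul trmxK hA mulmxA.
by rewrite mxE.
Qed.

Lemma qf_bf A y : qf A y = bf A y y. Proof. by []. Qed.

Lemma qf_comb A a b y z : A^T = A ->
  qf A (a *: y + b *: z) = a ^+ 2 * qf A y + 2%:R * a * b * bf A y z + b ^+ 2 * qf A z.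
Proof.
move=> hA; rewrite qf_bf bfDl !bfDr !qf_bf (bf_sym y z hA); ring.
Qed.

Lemma bf0r A y : bf A y 0 = 0.
Proof. by rewrite /bf linear0 mulmx0 mxE. Qed.

Lemma qf0 A : qf A 0 = 0.
Proof. by rewrite /qf !mul0mx mxE. Qed.

Lemma indep p q s t : row_free (col_mx p q) -> s *: p + t *: q = 0 -> s = 0 /\ t = 0.
Proof.
move=> hf e.
have : (row_mx (s%:M : 'M_1) (t%:M : 'M_1)) *m col_mx p q = 0 *m col_mx p q.
  by rewrite mul_row_col !mul_scalar_mx e mul0mx.
move/(row_free_inj hf)/eqP; rewrite row_mx_eq0 => /andP[/eqP hs /eqP ht].
split.
- by have := congr1 (fun M : 'M_1 => M 0 0) hs; rewrite !mxE.
- by have := congr1 (fun M : 'M_1 => M 0 0) ht; rewrite !mxE.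
Qed.

End Basics.
Section Main.
Variables (K : fieldType) (m n : nat) (As : 'I_n.+1 -> 'M[K]_m.+1).
Hypothesis hsym : forall i, (As i)^T = As i.
Variables (p q : 'rV[K]_m.+1).
Hypothesis hl : is_line p q.

Lemma psi_def_iff y : psi_defined As y <-> psi_vec As y != 0.
Proof.
split.
- case=> i hi; apply/eqP=> e; move: hi.
  have <- : psi_vec As y 0 i = qf (As i) y by rewrite mxE.
  by rewrite e mxE eqxx.
- move=> h; case: (pickP (fun i => qf (As i) y != 0)) => [i hi|h0]; first by exists i.
  case/eqP: h; apply/rowP=> i; rewrite !mxE; move: (h0 i) => /= /negbFE /eqP //.
Qed.

Lemma comb_eq0 s t : s *: p + t *: q = 0 -> s = 0 /\ t = 0.
Proof. exact: indep. Qed.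

Lemma on_line_nz y : on_line p q y -> y != 0.
Proof.
case=> s [t [hst ->]]; apply/eqP=> /comb_eq0 [hs ht].
by case: hst => /eqP.
Qed.

Lemma span_line s t y : y = s *: p + t *: q -> y != 0 -> on_line p q y.
Proof.
move=> e hy; exists s, t; split=> //.
case: (eqVneq s 0) => [hs|]; last by left.
case: (eqVneq t 0) => [ht|]; last by right.
by move: hy; rewrite e hs ht !scale0r addr0 eqxx.
Qed.

Lemma comb2 a b s1 t1 s2 t2 :
  a *: (s1 *: p + t1 *: q) + b *: (s2 *: p + t2 *: q) =
  (a * s1 + b * s2) *: p + (a * t1 + b * t2) *: q.
Proof.
by rewrite !scalerDr !scalerA !scalerDl addrACA.
Qed.

Lemma rebase s1 t1 s2 t2 y z :
  y = s1 *: p + t1 *: q -> z = s2 *: p + t2 *: q -> s1 * t2 - s2 * t1 != 0 ->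
  forall w, on_line p q w -> exists a b, w = a *: y + b *: z.
Proof.
move=> -> -> hD w [u [v [_ ->]]].
exists ((u * t2 - v * s2) / (s1 * t2 - s2 * t1)), ((s1 * v - t1 * u) / (s1 * t2 - s2 * t1)).
rewrite comb2; congr (_ *: _ + _ *: _); field; exact: hD.
Qed.

Lemma D_proj s1 t1 s2 t2 :
  (s1 != 0 \/ t1 != 0) -> (s2 != 0 \/ t2 != 0) -> s1 * t2 - s2 * t1 = 0 ->
  proj_eq (s1 *: p + t1 *: q) (s2 *: p + t2 *: q).
Proof.
move=> h1 h2 /eqP; rewrite subr_eq0 => /eqP hD.
case: (eqVneq s1 0) => [hs1|hs1].
- have ht1 : t1 != 0 by case: h1 => //; rewrite hs1 eqxx.
  have hs2 : s2 = 0.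
    by apply/eqP; move: hD; rewrite hs1 mul0r => /esym /eqP; rewrite mulf_eq0 (negbTE ht1) orbF.
  have ht2 : t2 != 0 by case: h2 => //; rewrite hs2 eqxx.
  exists (t2 / t1); split; first by rewrite mulf_neq0 // invr_eq0.
  rewrite scalerDr !scalerA hs1 hs2 !mulr0; congr (_ *: _ + _ *: _); field; exact: ht1.
- exists (s2 / s1); split.
    rewrite mulf_neq0 // ?invr_eq0 //; apply/eqP=> hs2.
    case: h2; first by rewrite hs2 eqxx.
    by move: hD; rewrite hs2 mul0r => /eqP; rewrite mulf_eq0 (negbTE hs1) /= => /eqP ->; rewrite eqxx.
  rewrite scalerDr !scalerA; congr (_ *: _ + _ *: _).
    by field.
  apply: (mulfI hs1); rewrite hD; field; exact: hs1.
Qed.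

Lemma forward_core s1 t1 s2 t2 y z (V : 'rV[K]_n.+1) :
  y = s1 *: p + t1 *: q -> z = s2 *: p + t2 *: q -> s1 * t2 - s2 * t1 != 0 ->
  (forall a b, exists k, psi_vec As (a *: y + b *: z) = k *: V) ->
  (exists w0, on_line p q w0 /\ psi_defined As w0) ->
  psi_single_point As p q.
Proof.
move=> ey ez hD hV [w0 [hw0 hd0]].
have hr := rebase ey ez hD.
exists V; split; last split.
- case: (hr _ hw0) => a [b ew]; case: (hV a b) => k ek.
  apply/eqP=> V0; move/psi_def_iff: hd0; by rewrite ew ek V0 scaler0 eqxx.
- by exists w0.
- move=> w hw /psi_def_iff hd; case: (hr _ hw) => a [b ew]; case: (hV a b) => k ek.
  exists k; split; last by rewrite ew ek.
  by apply/eqP=> k0; move: hd; rewrite ew ek k0 scale0r eqxx.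
Qed.

Lemma not_in_line : ~ line_in_cayley As p q -> exists w0, on_line p q w0 /\ psi_defined As w0.
Proof.
move=> h; apply: NNPP => hn; apply: h => y hy; split; first exact: on_line_nz.
move=> i; apply: NNPP => hq; apply: hn; exists y; split=> //; exists i; exact/eqP.
Qed.

Lemma forward : secant_line As p q -> ~ line_in_cayley As p q -> psi_single_point As p q.
Proof.
move=> hs hn; have hw0 := not_in_line hn.
case: hs => [[y [z [hy hz [_ hCy] [_ hCz] hnp]]] | [y [hy [_ hCy] ht]]].
- case: (hy) => s1 [t1 [h1 ey]]; case: (hz) => s2 [t2 [h2 ez]].
  have hD : s1 * t2 - s2 * t1 != 0.
    by apply/eqP=> hD; apply: hnp; rewrite ey ez; exact: D_proj.
  apply: (forward_core (V := \row_i bf (As i) y z) ey ez hD) hw0 => a b.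
  exists (2%:R * a * b); apply/rowP=> i; rewrite !mxE qf_comb // hCy hCz; ring.
- case: (hy) => s1 [t1 [h1 ey]].
  have key : forall z, on_line p q z -> forall a b, exists k, psi_vec As (a *: y + b *: z) = k *: psi_vec As z.
    move=> z hz a b; exists (b ^+ 2); apply/rowP=> i; rewrite !mxE qf_comb // hCy ht //; ring.
  case: (eqVneq s1 0) => [hs1|hs1].
  + have ht1 : t1 != 0 by case: h1 => //; rewrite hs1 eqxx.
    have ep : p = 1 *: p + 0 *: q by rewrite scale1r scale0r addr0.
    have hD : s1 * 0 - 1 * t1 != 0 by rewrite mulr0 mul1r sub0r oppr_eq0.
    apply: (forward_core ey ep hD) hw0; apply: key.
    exists 1, 0; split; [left; exact: oner_neq0 | exact: ep].
  + have eq' : q = 0 *: p + 1 *: q by rewrite scale1r scale0r add0r.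
    have hD : s1 * 1 - 0 * t1 != 0 by rewrite mulr1 mul0r subr0.
    apply: (forward_core ey eq' hD) hw0; apply: key.
    exists 0, 1; split; [right; exact: oner_neq0 | exact: eq'].
Qed.

End Main.

Lemma bfZr (K : fieldType) m (A : 'M[K]_m.+1) c y w : bf A w (c *: y) = c * bf A w y.
Proof. by rewrite /bf linearZ /= -scalemxAr mxE. Qed.

Section Conv.
Variables (K : closedFieldType) (m n : nat) (As : 'I_n.+1 -> 'M[K]_m.+1).
Hypothesis hsym : forall i, (As i)^T = As i.
Hypothesis h2 : (2%:R : K) != 0.
Variables (p q : 'rV[K]_m.+1).
Hypothesis hl : is_line p q.

Definition inspan (y : 'rV[K]_m.+1) := exists s t, y = s *: p + t *: q.

Lemma inspanD y z : inspan y -> inspan z -> inspan (y + z).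
Proof.
case=> s1 [t1 ->] [s2 [t2 ->]]; exists (s1 + s2), (t1 + t2).
by rewrite !scalerDl addrACA.
Qed.

Lemma converse : psi_single_point As p q -> secant_line As p q.
Proof.
case=> v [hv0 [[y1 [hy1 hd1]] hall]].
have [j hj] : exists j, v 0 j != 0.
  case: (pickP (fun j => v 0 j != 0)) => [j hj|h0]; first by exists j.
  by case/eqP: hv0; apply/rowP=> i; rewrite !mxE; move: (h0 i) => /negbFE /eqP.
have hprop : forall i w, inspan w -> qf (As i) w * v 0 j = v 0 i * qf (As j) w.
  move=> i w [s [t ew]].
  case: (eqVneq w 0) => [->|wn0]; first by rewrite !qf0 mul0r mulr0.
  have hw : on_line p q w := span_line ew wn0.
  case: (classic (psi_defined As w)) => hd.
    case: (hall w hw hd) => c [_ ec].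
    have e1 : forall k, qf (As k) w = c * v 0 k.
      by move=> k; have := congr1 (fun M : 'rV_n.+1 => M 0 k) ec; rewrite !mxE.
    by rewrite !e1; ring.
  have e0 : forall k, qf (As k) w = 0.
    by move=> k; apply: NNPP => hk; apply: hd; exists k; apply/eqP.
  by rewrite !e0 mul0r mulr0.
have hbf : forall i y z, inspan y -> inspan z -> bf (As i) y z * v 0 j = v 0 i * bf (As j) y z.
  move=> i y z hy hz.
  have e : forall k, qf (As k) (y + z) = qf (As k) y + 2%:R * bf (As k) y z + qf (As k) z.
    move=> k. have hh := @qf_comb _ _ (As k) 1 1 y z (hsym k). rewrite !scale1r in hh; rewrite hh; ring.
  have := hprop i _ (inspanD hy hz); rewrite !e.
  move: (hprop i _ hy) (hprop i _ hz) => ey ez eyz.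
  apply: (mulfI h2); apply/eqP; rewrite -subr_eq0; apply/eqP.
  have -> : 2%:R * (bf (As i) y z * v 0 j) - 2%:R * (v 0 i * bf (As j) y z) =
    ((qf (As i) y + 2%:R * bf (As i) y z + qf (As i) z) * v 0 j -
     v 0 i * (qf (As j) y + 2%:R * bf (As j) y z + qf (As j) z)) -
    (qf (As i) y * v 0 j - v 0 i * qf (As j) y) - (qf (As i) z * v 0 j - v 0 i * qf (As j) z) by ring.
  by rewrite eyz ey ez !subrr.
have hCi : forall y, inspan y -> y != 0 -> qf (As j) y = 0 -> in_cayley As y.
  move=> y hy yn0 hq; split=> // i; apply: (mulIf hj); by rewrite hprop // hq !mulr0 mul0r.
have spp : inspan p by exists 1, 0; rewrite scale1r scale0r addr0.
have spq : inspan q by exists 0, 1; rewrite scale1r scale0r add0r.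
have spZ : forall c y, inspan y -> inspan (c *: y).
  by move=> c y [s [t ->]]; exists (c * s), (c * t); rewrite scalerDr !scalerA.
have pn0 : p != 0.
  by apply/eqP=> e; case: (comb_eq0 hl (s := 1) (t := 0)) => [|/eqP]; rewrite ?oner_eq0 // e scale1r scale0r addr0.
have [y0 [hy0 y0n0 hQ0]] : exists y0, [/\ inspan y0, y0 != 0 & qf (As j) y0 = 0].
  case: (eqVneq (qf (As j) p) 0) => [ha|ha]; first by exists p.
  pose P := fun i : nat => if i == 0%N then - qf (As j) q / qf (As j) p
                           else - (2%:R * bf (As j) p q) / qf (As j) p.
  have [x hx] := @solve_monicpoly K 2 P isT.
  move: hx; rewrite !big_ord_recr big_ord0 /= /P /= expr0 expr1 mulr1 add0r => hx.
  exists (x *: p + 1 *: q); split.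
  - by exists x, 1.
  - by apply/eqP=> /(comb_eq0 hl) [_ /eqP]; rewrite oner_eq0.
  - rewrite qf_comb // hx; field; exact: ha.
have hC0 := hCi _ hy0 y0n0 hQ0.
have hl0 : on_line p q y0 by case: hy0 => s [t e]; exact: span_line e y0n0.
have two_pt : forall w, inspan w -> bf (As j) y0 w != 0 -> secant_line As p q.
  move=> w hw hB; left.
  pose z := qf (As j) w *: y0 + (- (2%:R * bf (As j) y0 w)) *: w.
  have hzs : inspan z.
    by apply: inspanD; apply: spZ.
  have hBz : bf (As j) y0 z = - (2%:R * bf (As j) y0 w ^+ 2).
    by rewrite /z bfDr -qf_bf hQ0; ring.
  have hBz0 : bf (As j) y0 z != 0.
    by rewrite hBz oppr_eq0 mulf_neq0 // expf_neq0.
  have zn0 : z != 0 by apply: contraNneq hBz0 => ->; rewrite bf0r.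
  have hQz : qf (As j) z = 0.
    by rewrite /z qf_comb // hQ0; ring.
  exists y0, z; split=> //.
  - by case: hzs => s [t e]; exact: span_line e zn0.
  - exact: hCi.
  - case=> c [_ ec]; move: hBz0; by rewrite ec bfZr -qf_bf hQ0 mulr0 eqxx.
case: (eqVneq (bf (As j) y0 p) 0) => [g1|g1]; last exact: two_pt g1.
case: (eqVneq (bf (As j) y0 q) 0) => [g2|g2]; last exact: two_pt g2.
right; exists y0; split=> // z [u [w [_ ->]]] i.
rewrite bfDr.
have e : forall r, inspan r -> bf (As j) y0 r = 0 -> bf (As i) y0 r = 0.
  by move=> r hr hr0; apply: (mulIf hj); rewrite hbf // hr0 mulr0 mul0r.
by rewrite (e p) // (e q) // !mulr0 addr0.
Qed.

End Conv.

Unset Implicit Arguments.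

Theorem lemma5p1p1 (k : fieldType) (K : closedFieldType) (f : {rmorphism k -> K})
    (m n : nat) (As : 'I_n.+1 -> 'M[k]_m.+1)
    (h2 : (2%:R : k) != 0) (h3 : (3%:R : k) != 0)
    (hsym : forall i, (As i)^T = As i)
    (p q : 'rV[K]_m.+1) (hl : is_line p q) :
  let AK := fun i => map_mx f (As i) in
  (secant_line AK p q -> ~ line_in_cayley AK p q -> psi_single_point AK p q) /\
  (psi_single_point AK p q -> secant_line AK p q).
Proof.
move=> AK.
have hsK : forall i, (AK i)^T = AK i by move=> i; rewrite /AK map_trmx hsym.
have h2K : (2%:R : K) != 0 by rewrite -(rmorph_nat f) fmorph_eq0.
split.
- exact: (forward hsK hl).
- exact: (converse hsK h2K hl).
Qed.
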